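(* Let $N\ge 2$ and let $\mu_1,\dots,\mu_N$ be real numbers with $\mu_1\le 0<\mu_2<\mu_3<\cdots<\mu_N$. Let $\delta$ be a sufficiently small positive constant ($0<\delta\ll1$). Let $\pi_1$ satisfy $0<\pi_1\le\frac{\mu_N-\delta}{\mu_N-\mu_1}$. Let $f:\mathbb R^+\to\mathbb R^+$ be a differentiable function with $f'(\mu)\ge 0$ for all $\mu>0$, and let $f(\mu_1)$ denote an arbitrary given real constant. Consider the problem of minimizing $$\Phi(\pi_2,\dots,\pi_N)=\pi_1 f(\mu_1)+\sum_{j=2}^N\pi_j f(\mu_j)$$ over all $(\pi_2,\dots,\pi_N)$ satisfying $$\sum_{j=2}^N\pi_j\mu_j\ge-\pi_1\mu_1+\delta,\qquad \sum_{j=2}^N\pi_j=1-\pi_1,\qquad \pi_j\ge0\ (2\le j\le N).$$ Define $k^*$ as the index in $\{2,\dots,N\}$ with $$\mu_{k^*}=\min\Big\{\mu_k:\ \mu_k>\frac{-\pi_1\mu_1}{1-\pi_1},\ 2\le k\le N\Big\},$$ and for $2\le l<m\le N$ define $$F(\mu_l,\mu_m)=\pi_1 f(\mu_1)+\frac{f(\mu_m)-f(\mu_l)}{\mu_m-\mu_l}(\delta-\pi_1\mu_1)+\frac{\mu_m f(\mu_l)-\mu_l f(\mu_m)}{\mu_m-\mu_l}(1-\pi_1).$$ Then: (1) If $k^*=2$, the minimal value of $\Phi$ under the constraints is $\pi_1 f(\mu_1)+(1-\pi_1)f(\mu_2)$, attained by $\pi_2=1-\pi_1$ and $\pi_j=0$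 for $j\ge3$. (2) If $k^*>2$, the minimal value of $\Phi$ under the constraints is $$\min_{2\le l<k^*\le m\le N}F(\mu_l,\mu_m),$$ and, writing $(l^*,m^* )$ for a minimizing pair, it is attained by $\pi_j=0$ for $j\notin\{l^*,m^*\}$ and $$\begin{pmatrix}\pi_{l^*}\\ \pi_{m^*}\end{pmatrix}=\frac{1}{\mu_{m^*}-\mu_{l^*}}\begin{pmatrix}(\mu_{m^*}-\delta)+\pi_1(\mu_1-\mu_{m^*})\\ -(\mu_{l^*}-\delta)+\pi_1(\mu_{l^*}-\mu_1)\end{pmatrix}.$$
   Context: Interpretation (cyber epidemic model with a fixed attack-defense graph $G$ with adjacency matrix $A$): configurations are $\mathcal C_j=(G,\beta_j,\gamma_j)$ with cure probability $\beta_j$ and infection probability $\gamma_j$; $\lambda_1(A)$ is the eigenvalue of $A$ of largest modulus and $\mu_j=\beta_j-\gamma_j\lambda_1(A)$. $\mathcal C_1$ violates the epidemic-threshold condition $\mu>0$ and the system must stay in it for the portion of time $\pi_1$; $\mathcal C_2,\dots,\mathcal C_N$ are moving-target-defense-induced configurations satisfying $\mu_j>0$, with portions of time $\pi_j$. $f(\mu_j)$ is the cost of inducing $\mathcal C_j$, and the constraint $\sum_{j\ge2}\pi_j\mu_j\ge-\pi_1\mu_1+\delta$ is the (strictified) sufficient condition for the infection dying out. *)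

(* Defs.v *)
From HB Require Import structures.
From mathcomp Require Import all_boot all_order all_algebra.
From mathcomp Require Import all_classical all_reals all_analysis.
Set Implicit Arguments. Unset Strict Implicit. Unset Printing Implicit Defensive.
Import Order.TTheory GRing.Theory Num.Theory.
Local Open Scope ring_scope.

(* Indices: configurations are numbered 1..N; mu j is mu_j, pi j is pi_j.
   Only pi 2, ..., pi N are decision variables. *)

Definition feasible (R : realType) (N : nat) (mu : nat -> R) (pi1 delta : R)
  (pi : nat -> R) : Prop :=
  [/\ (forall j, (2 <= j <= N)%N -> 0 <= pi j),
      \sum_(2 <= j < N.+1) pi j = 1 - pi1
    & - (pi1 * mu 1%N) + delta <= \sum_(2 <= j < N.+1) pi j * mu j].

(* Objective Phi; f1 stands for the given constant f(mu_1). *)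
Definition Phi (R : realType) (N : nat) (mu : nat -> R) (f : R -> R) (f1 pi1 : R)
  (pi : nat -> R) : R :=
  pi1 * f1 + \sum_(2 <= j < N.+1) pi j * f (mu j).

Definition Fval (R : realType) (mu : nat -> R) (f : R -> R) (f1 pi1 delta : R)
  (l m : nat) : R :=
  pi1 * f1
  + (f (mu m) - f (mu l)) / (mu m - mu l) * (delta - pi1 * mu 1%N)
  + (mu m * f (mu l) - mu l * f (mu m)) / (mu m - mu l) * (1 - pi1).

Definition pi_pair (R : realType) (mu : nat -> R) (pi1 delta : R) (l m : nat)
  (j : nat) : R :=
  if j == l then ((mu m - delta) + pi1 * (mu 1%N - mu m)) / (mu m - mu l)
  else if j == m then (- (mu l - delta) + pi1 * (mu l - mu 1%N)) / (mu m - mu l)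
  else 0.

Definition pi_single (R : realType) (pi1 : R) (j : nat) : R :=
  if j == 2%N then 1 - pi1 else 0.

(* Main.v *)
Require Import Defs.
From HB Require Import structures.
From mathcomp Require Import all_boot all_order all_algebra.
From mathcomp Require Import all_classical all_reals all_analysis.
Import Order.TTheory GRing.Theory Num.Theory.
From mathcomp Require Import zify ring lra.
Local Open Scope ring_scope.

Ltac nlia := repeat match goal with
 | H : is_true ?b |- _ => lazymatch b with
     | context [@Order.le] => clear H
     | context [@Order.lt] => clear H end
 | H : forall _, _ |- _ => clear H
 | H : _ = _ :> Num.RealField.sort _ |- _ => clear H
 end; lia.

Lemma seq_min {R : realType} (T : eqType) (F : T -> R) (s : seq T) :
  s != [::] -> exists2 x, x \in s & forall y, y \in s -> F x <= F y.
Proof.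
elim: s => [//|a s IH] _.
case: (eqVneq s [::]) => [->|ns].
  by exists a; rewrite ?inE // => y; rewrite inE => /eqP ->.
have [x xs hx] := IH ns.
case: (lerP (F a) (F x)) => h.
  exists a; first by rewrite inE eqxx.
  move=> y; rewrite inE => /orP[/eqP->//|ys]; exact: le_trans h (hx _ ys).
exists x; first by rewrite inE xs orbT.
move=> y; rewrite inE => /orP[/eqP->|ys]; [exact: ltW | exact: hx].
Qed.

Lemma seq_lb {R : realType} (P : pred nat) (g : nat -> R) (s : seq nat) :
  (forall k, k \in s -> P k -> 0 < g k) ->
  exists d, 0 < d /\ forall k, k \in s -> P k -> d <= g k.
Proof.
elim: s => [|a s IH] H.
  by exists 1; split => // k.
have [d [d0 hd]] : exists d, 0 < d /\ forall k, k \in s -> P k -> d <= g k.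
  by apply: IH => k ks; apply: H; rewrite inE ks orbT.
case Pa: (P a).
  have ga : 0 < g a by apply: H; rewrite ?inE ?eqxx.
  exists (Num.min d (g a)); split; first by rewrite lt_min d0 ga.
  move=> k; rewrite inE => /orP[/eqP->|ks] Pk; rewrite ge_min ?lexx ?orbT //.
  by rewrite hd.
exists d; split => // k; rewrite inE => /orP[/eqP->|ks] Pk; last exact: hd.
by rewrite Pa in Pk.
Qed.

Lemma sum_single {R : realType} (N l : nat) (c : R) (G : nat -> R) :
  (2 <= l <= N)%N ->
  \sum_(2 <= j < N.+1) (if j == l then c else 0) * G j = c * G l.
Proof.
move=> hl.
rewrite (bigD1_seq l) /=; last exact: iota_uniq.
  rewrite eqxx big1 ?addr0 // => j /negbTE ->; by rewrite mul0r.
rewrite mem_index_iota; lia.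
Qed.

Lemma sum_cert {R : realType} (N : nat) (mu : nat -> R) (f : R -> R) (f1 pi1 delta A C : R)
  (pi : nat -> R) :
  feasible N mu pi1 delta pi -> 0 <= C ->
  (forall j, (2 <= j <= N)%N -> A + C * mu j <= f (mu j)) ->
  pi1 * f1 + A * (1 - pi1) + C * (- (pi1 * mu 1%N) + delta) <= Phi N mu f f1 pi1 pi.
Proof.
move=> [p0 ps pm] C0 hj; rewrite /Phi -addrA lerD2l.
apply: (@le_trans _ _ (\sum_(2 <= j < N.+1) pi j * (A + C * mu j))).
  rewrite -ps mulr_sumr.
  under [X in _ <= X]eq_bigr do rewrite mulrDr.
  rewrite big_split /=.
  have -> : \sum_(2 <= i < N.+1) pi i * A = \sum_(2 <= i < N.+1) A * pi i.
    by apply: eq_bigr => i _; rewrite mulrC.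
  rewrite lerD2l.
  have -> : \sum_(2 <= i < N.+1) pi i * (C * mu i) = C * \sum_(2 <= i < N.+1) pi i * mu i.
    by rewrite mulr_sumr; apply: eq_bigr => i _; rewrite mulrCA.
  exact: ler_wpM2l.
apply: ler_sum_nat => j hj2; apply: ler_wpM2l; first by apply: p0; lia.
apply: hj; lia.
Qed.
Definition Gv {R : realFieldType} (B S x fx y fy : R) :=
  (fy - fx)/(y-x) * B + (y*fx - x*fy)/(y-x) * S.

Lemma left_move {R : realFieldType} (B S x fx y fy z fz : R) :
  x < y -> z < y -> 0 < y * S - B ->
  Gv B S x fx y fy <= Gv B S z fz y fy ->
  (y*fx - x*fy)/(y-x) + (fy - fx)/(y-x) * z <= fz.
Proof.
move=> xy zy hq H.
have e : Gv B S z fz y fy = Gv B S x fx y fy +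
   (fz - ((y*fx - x*fy)/(y-x) + (fy - fx)/(y-x) * z)) * ((y * S - B)/(y - z)).
  rewrite /Gv; field.
  by apply/andP; split; rewrite subr_eq0 gt_eqF.
move: H; rewrite e lerDl pmulr_lge0 ?subr_ge0 //.
by apply: divr_gt0 => //; rewrite subr_gt0.
Qed.

Lemma right_move {R : realFieldType} (B S x fx y fy z fz : R) :
  x < y -> x < z -> 0 < B - x * S ->
  Gv B S x fx y fy <= Gv B S x fx z fz ->
  (y*fx - x*fy)/(y-x) + (fy - fx)/(y-x) * z <= fz.
Proof.
move=> xy xz hq H.
have e : Gv B S x fx z fz = Gv B S x fx y fy +
   (fz - ((y*fx - x*fy)/(y-x) + (fy - fx)/(y-x) * z)) * ((B - x * S)/(z - x)).
  rewrite /Gv; field.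
  by apply/andP; split; rewrite subr_eq0 gt_eqF.
move: H; rewrite e lerDl pmulr_lge0 ?subr_ge0 //.
by apply: divr_gt0 => //; rewrite subr_gt0.
Qed.

Lemma fmono {R : realType} (f : R -> R) :
  (forall x : R, 0 < x -> derivable f x 1) ->
  (forall x : R, 0 < x -> 0 <= derive1 f x) ->
  forall x y : R, 0 < x -> x <= y -> f x <= f y.
Proof.
move=> df d0 x y x0 xy.
apply: (@ger0_derive1_ndecr R f x y) => //.
- move=> z; rewrite in_itv /= => /andP[h _]; apply: df; exact: lt_trans h.
- move=> z; rewrite in_itv /= => /andP[h _]; apply: d0; exact: lt_trans h.
- apply: derivable_within_continuous => z; rewrite in_itv /= => /andP[h _].
  apply: df; exact: lt_le_trans h.
Qed.

Lemma mu_lt {R : realType} {N : nat} {mu : nat -> R} :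
  (forall j, (2 <= j < N)%N -> mu j < mu j.+1) ->
  forall j k, (2 <= j)%N -> (j < k)%N -> (k <= N)%N -> mu j < mu k.
Proof.
move=> hinc j; elim=> [|k IH] //= hj hjk hk.
case: (ltngtP j k) => h.
- apply: lt_trans (IH hj h _) (hinc _ _); lia.
- lia.
- subst; apply: hinc; lia.
Qed.

Lemma mu_le {R : realType} {N : nat} {mu : nat -> R} :
  (forall j, (2 <= j < N)%N -> mu j < mu j.+1) ->
  forall j k, (2 <= j)%N -> (j <= k)%N -> (k <= N)%N -> mu j <= mu k.
Proof.
move=> hinc j k hj hjk hk; case: (ltngtP j k) => h.
- by apply: ltW; apply: (mu_lt hinc).
- lia.
- by subst.
Qed.

Theorem theorem3 (R : realType) (N : nat) (mu : nat -> R) (f : R -> R) (f1 : R) :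
  (2 <= N)%N ->
  mu 1%N <= 0 -> 0 < mu 2%N ->
  (forall j, (2 <= j < N)%N -> mu j < mu j.+1) ->
  (forall x : R, 0 < x -> 0 < f x) ->
  (forall x : R, 0 < x -> derivable f x 1) ->
  (forall x : R, 0 < x -> 0 <= derive1 f x) ->
  forall pi1 : R, 0 < pi1 ->
  exists delta0 : R, 0 < delta0 /\
  forall delta : R, 0 < delta -> delta < delta0 ->
  pi1 <= (mu N - delta) / (mu N - mu 1%N) ->
  forall kstar : nat, (2 <= kstar <= N)%N ->
    - (pi1 * mu 1%N) / (1 - pi1) < mu kstar ->
    (forall k, (2 <= k <= N)%N -> - (pi1 * mu 1%N) / (1 - pi1) < mu k ->
       mu kstar <= mu k) ->
  (* case (1) *)
  (kstar = 2%N ->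
     feasible N mu pi1 delta (pi_single pi1) /\
     Phi N mu f f1 pi1 (pi_single pi1) = pi1 * f1 + (1 - pi1) * f (mu 2%N) /\
     (forall pi, feasible N mu pi1 delta pi ->
        pi1 * f1 + (1 - pi1) * f (mu 2%N) <= Phi N mu f f1 pi1 pi)) /\
  (* case (2) *)
  ((2 < kstar)%N ->
     (exists l m, [/\ (2 <= l)%N, (l < kstar)%N, (kstar <= m)%N, (m <= N)%N &
        forall l' m', (2 <= l')%N -> (l' < kstar)%N -> (kstar <= m')%N -> (m' <= N)%N ->
          Fval mu f f1 pi1 delta l m <= Fval mu f f1 pi1 delta l' m']) /\
     (forall l m, (2 <= l)%N -> (l < kstar)%N -> (kstar <= m)%N -> (m <= N)%N ->
        (forall l' m', (2 <= l')%N -> (l' < kstar)%N -> (kstar <= m')%N -> (m' <= N)%N ->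
          Fval mu f f1 pi1 delta l m <= Fval mu f f1 pi1 delta l' m') ->
        feasible N mu pi1 delta (pi_pair mu pi1 delta l m) /\
        Phi N mu f f1 pi1 (pi_pair mu pi1 delta l m) = Fval mu f f1 pi1 delta l m /\
        (forall pi, feasible N mu pi1 delta pi ->
           Fval mu f f1 pi1 delta l m <= Phi N mu f f1 pi1 pi))).

Proof.
move=> HN hmu1 hmu2 hinc fpos fder fd0 pi1 hpi1.
have muNpos : 0 < mu N by apply: (lt_le_trans hmu2); apply: (mu_le hinc); lia.
have mupos : forall j, (2 <= j <= N)%N -> 0 < mu j.
  move=> j hj; apply: (lt_le_trans hmu2); apply: (mu_le hinc); lia.
have fmon : forall j, (2 <= j <= N)%N -> forall k, (j <= k <= N)%N -> f (mu j) <= f (mu k).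
  move=> j hj k hk; apply: fmono => //; first exact: mupos.
  apply: (mu_le hinc); lia.
case: (ltP pi1 1) => hp1; last first.
  exists 1; split => // delta d0 _ hle; exfalso.
  have : (mu N - delta) / (mu N - mu 1%N) < 1.
    rewrite ltr_pdivrMr ?mul1r; [lra | lra].
  lra.
pose S := 1 - pi1.
have S0 : 0 < S by rewrite /S; lra.
pose c := - (pi1 * mu 1%N) / S.
have cS : c * S = - (pi1 * mu 1%N) by rewrite /c divfK // gt_eqF.
have [d [d0 hd]] : exists d, 0 < d /\ forall k, k \in iota 2 N.-1 -> c < mu k -> d <= (mu k - c) * S.
  apply: seq_lb => k _ Pk; apply: mulr_gt0 => //; rewrite subr_gt0 //.
exists d; split => // delta hdel hdd hle kstar hk hck hmin.
have hb : - (pi1 * mu 1%N) + delta < S * mu kstar.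
  have := hd kstar; rewrite mem_iota => /(_ ltac:(nlia) hck).
  rewrite mulrBl cS mulrC; lra.
have hlow : forall j, (2 <= j)%N -> (j < kstar)%N -> S * mu j < - (pi1 * mu 1%N) + delta.
  move=> j hj hjk.
  have mjc : mu j <= c.
    rewrite leNgt; apply/negP => cj.
    have := hmin j ltac:(nlia) cj.
    by rewrite leNgt (mu_lt hinc j kstar hj hjk ltac:(nlia)).
  have : S * mu j <= S * c by rewrite ler_pM2l.
  rewrite [S * c]mulrC cS => h; apply: (le_lt_trans h); by rewrite ltrDl.
split.
  move=> ek; subst kstar.
  have hsum : forall G, \sum_(2 <= j < N.+1) pi_single pi1 j * G j = (1 - pi1) * G 2%N.
    by move=> G; rewrite /pi_single sum_single.
  split; [split|split].
  - by move=> j _; rewrite /pi_single; case: ifP => _ //; rewrite subr_ge0 ltW.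
  - have := hsum (fun _ => 1); rewrite mulr1 => <-.
    by apply: eq_bigr => j _; rewrite mulr1.
  - by rewrite hsum; apply: ltW.
  - by rewrite /Phi hsum.
  - move=> pi fp.
    have := @sum_cert R N mu f f1 pi1 delta (f (mu 2%N)) 0 pi fp (lexx 0).
    rewrite mul0r addr0 [f _ * _]mulrC; apply.
    move=> j hj; rewrite mul0r addr0; apply: fmon; nlia.
move=> k2.
have hpairs : forall p, p \in [seq (l, m) | l <- iota 2 (kstar - 2), m <- iota kstar (N.+1 - kstar)] <->
   [/\ (2 <= p.1)%N, (p.1 < kstar)%N, (kstar <= p.2)%N & (p.2 <= N)%N].
  move=> [l m] /=; split.
    case/allpairsP => [[l' m'] /= [hl hm [-> ->]]].
    move: hl hm; rewrite !mem_iota => hl hm; split; nlia.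
  move=> [h1 h2 h3 h4]; apply/allpairsP; exists (l, m) => /=; rewrite !mem_iota; split => //; nlia.
pose B := delta - pi1 * mu 1%N.
have eF : forall l m, Fval mu f f1 pi1 delta l m = pi1 * f1 + Gv B S (mu l) (f (mu l)) (mu m) (f (mu m)).
  by move=> l m; rewrite /Fval /Gv addrA.
have hbB : B < S * mu kstar by rewrite /B addrC.
have hlowB : forall j, (2 <= j)%N -> (j < kstar)%N -> S * mu j < B.
  by move=> j hj hjk; rewrite /B addrC; apply: hlow.
split.
  have hne : [seq (l, m) | l <- iota 2 (kstar - 2), m <- iota kstar (N.+1 - kstar)] != [::].
    apply/negP => /eqP e.
    have h2k : (2%N, kstar) \in [seq (l, m) | l <- iota 2 (kstar - 2), m <- iota kstar (N.+1 - kstar)].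
      by apply/hpairs; split => /=; nlia.
    by rewrite e in h2k.
  have [[l m] hin hminp] := @seq_min R _ (fun p => Fval mu f f1 pi1 delta p.1 p.2) _ hne.
  have [h1 h2 h3 h4] := (proj1 (hpairs (l, m))) hin.
  exists l, m; split => // l' m' h1' h2' h3' h4'.
  by apply: (hminp (l', m')); apply/hpairs.
move=> l m hl hlk hkm hmN hopt.
have mlm : mu l < mu m by apply: (mu_lt hinc l m) => //; nlia.
have hSl : S * mu l < B by apply: hlowB.
have hSm : B < S * mu m.
  apply: (lt_le_trans hbB); rewrite ler_pM2l //; apply: (mu_le hinc); nlia.
have dlm : 0 < mu m - mu l by rewrite subr_gt0.
pose Pl := ((mu m - delta) + pi1 * (mu 1%N - mu m)) / (mu m - mu l).
pose Pm := (- (mu l - delta) + pi1 * (mu l - mu 1%N)) / (mu m - mu l).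
have ePl : Pl = (S * mu m - B) / (mu m - mu l) by rewrite /Pl /S /B; congr (_ / _); ring.
have ePm : Pm = (B - S * mu l) / (mu m - mu l) by rewrite /Pm /S /B; congr (_ / _); ring.
have Pl0 : 0 <= Pl by rewrite ePl; apply: divr_ge0; rewrite ?subr_ge0; apply: ltW.
have Pm0 : 0 <= Pm by rewrite ePm; apply: divr_ge0; rewrite ?subr_ge0; apply: ltW.
have lm : l != m by rewrite neq_ltn (leq_trans hlk hkm).
have hsum : forall G, \sum_(2 <= j < N.+1) pi_pair mu pi1 delta l m j * G j = Pl * G l + Pm * G m.
  move=> G.
  rewrite (eq_bigr (fun j => (if j == l then Pl else 0) * G j + (if j == m then Pm else 0) * G j)).
    rewrite big_split /= !sum_single //; nlia.
  move=> j _; rewrite /pi_pair -mulrDl; congr (_ * _).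
  case: (eqVneq j l) => [->|jl]; first by rewrite (negbTE lm) addr0.
  by case: (eqVneq j m) => _; rewrite ?add0r.
have dne : mu m - mu l != 0 by rewrite gt_eqF.
split; [split|split].
- move=> j _; rewrite /pi_pair; case: ifP => _; first exact: Pl0.
  by case: ifP => _ //; exact: Pm0.
- have := hsum (fun _ => 1); rewrite !mulr1 => e.
  rewrite (eq_bigr (fun j => pi_pair mu pi1 delta l m j * 1)); last by move=> j _; rewrite mulr1.
  rewrite e ePl ePm -mulrDl /S /B; field => //.
- rewrite hsum ePl ePm.
  have -> : (S * mu m - B) / (mu m - mu l) * mu l + (B - S * mu l) / (mu m - mu l) * mu m = B.
    by field.
  by rewrite /B addrC.
- rewrite /Phi hsum eF ePl ePm /Gv /S /B; field => //.
- move=> pi fp.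
  have hC : 0 <= (f (mu m) - f (mu l)) / (mu m - mu l).
    apply: divr_ge0; last exact: ltW.
    rewrite subr_ge0; apply: fmon; nlia.
  have := @sum_cert R N mu f f1 pi1 delta ((mu m * f (mu l) - mu l * f (mu m)) / (mu m - mu l))
     ((f (mu m) - f (mu l)) / (mu m - mu l)) pi fp hC.
  have -> : pi1 * f1 + (mu m * f (mu l) - mu l * f (mu m)) / (mu m - mu l) * (1 - pi1) +
     (f (mu m) - f (mu l)) / (mu m - mu l) * (- (pi1 * mu 1%N) + delta) = Fval mu f f1 pi1 delta l m.
    by rewrite /Fval; ring.
  apply => j hj.
  have hG : forall l' m', (2 <= l')%N -> (l' < kstar)%N -> (kstar <= m')%N -> (m' <= N)%N ->
     Gv B S (mu l) (f (mu l)) (mu m) (f (mu m)) <= Gv B S (mu l') (f (mu l')) (mu m') (f (mu m')).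
    by move=> l' m' a1 a2 a3 a4; have := hopt l' m' a1 a2 a3 a4; rewrite !eF lerD2l.
  case: (ltnP j kstar) => hjk.
  + apply: (@left_move R B S (mu l) (f (mu l)) (mu m) (f (mu m)) (mu j) (f (mu j))) => //.
    * apply: (mu_lt hinc j m); nlia.
    * by rewrite subr_gt0 mulrC.
    * apply: hG => //; nlia.
  + apply: (@right_move R B S (mu l) (f (mu l)) (mu m) (f (mu m)) (mu j) (f (mu j))) => //.
    * apply: (mu_lt hinc l j); nlia.
    * by rewrite subr_gt0 mulrC.
    * apply: hG => //; nlia.
Qed.
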